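(* Let $n$ be a positive integer and let $p_1,\dots,p_r$ be pairwise coprime positive integers, and $m=\prod_{i=1}^r p_i$. Then $P(m,n)=\mathrm{lcm}\left(P(p_1,n),\dots,P(p_r,n)\right)$.
   Context: For positive integers $m,n$, let $\mathbf{Z}_m$ be the integers modulo $m$ and $T:\mathbf{Z}_m^n\to\mathbf{Z}_m^n$, $T(a_0,\dots,a_{n-1})=(a_0+a_1,a_1+a_2,\dots,a_{n-1}+a_0)$. For $\mathbf{a}\in\mathbf{Z}_m^n$ the cycle length of $(T^k\mathbf{a})_{k\ge0}$ is the smallest positive integer $P$ such that there is $N$ with $T^{k+P}\mathbf{a}=T^k\mathbf{a}$ for all $k\ge N$. $P(m,n)$ denotes the maximum of these cycle lengths over all $\mathbf{a}\in\mathbf{Z}_m^n$. *)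

(* Defs.v *)
From mathcomp Require Import all_boot.
Set Implicit Arguments. Unset Strict Implicit. Unset Printing Implicit Defensive.

(* Elements of (Z_m)^n are represented as finite functions a : 'I_n -> nat
   whose entries are the canonical residues, i.e. a i < m. *)
Definition is_vec (m n : nat) (a : {ffun 'I_n -> nat}) : Prop :=
  forall i, a i < m.

Definition Tmap (m n : nat) (a : {ffun 'I_n -> nat}) : {ffun 'I_n -> nat} :=
  [ffun i => (a i + a (ordS i)) %% m].

Definition is_eventual_period (m n : nat) (a : {ffun 'I_n -> nat}) (P : nat) : Prop :=
  0 < P /\ exists N, forall k, N <= k ->
    iter (k + P) (@Tmap m n) a = iter k (@Tmap m n) a.

Definition cycle_length (m n : nat) (a : {ffun 'I_n -> nat}) (P : nat) : Prop :=
  @is_eventual_period m n a P /\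
  forall Q, @is_eventual_period m n a Q -> P <= Q.

(* Pmax m n q  <->  q = P(m,n), the maximum cycle length over all a in Z_m^n. *)
Definition Pmax (m n q : nat) : Prop :=
  (exists a, @is_vec m n a /\ @cycle_length m n a q) /\
  (forall a Q, @is_vec m n a -> @cycle_length m n a Q -> Q <= q).

(* Main.v *)
Require Import Defs.
From mathcomp Require Import all_boot.
From Stdlib Require Import Classical.
From mathcomp Require Import zify.
Set Implicit Arguments. Unset Strict Implicit. Unset Printing Implicit Defensive.

Definition per (X : Type) (x : nat -> X) (P : nat) : Prop :=
  0 < P /\ exists N, forall k, N <= k -> x (k + P) = x k.

Lemma per_ext X (x y : nat -> X) P : x =1 y -> per x P -> per y P.
Proof. move=> e [P0 [N HN]]; split=> //; exists N => k Hk; rewrite -!e; exact: HN. Qed.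

Lemma per_add X (x : nat -> X) P Q : per x P -> per x Q -> per x (P + Q).
Proof.
move=> [P0 [N HN]] [Q0 [M HM]]; split; first by rewrite addn_gt0 P0.
exists (maxn N M) => k Hk.
rewrite addnA HM; first by apply: HN; apply: leq_trans Hk; exact: leq_maxl.
apply: leq_trans (leq_addr _ _); apply: leq_trans Hk; exact: leq_maxr.
Qed.

Lemma per_mul X (x : nat -> X) P c : 0 < c -> per x P -> per x (c * P).
Proof.
case: c => // c _ hP; elim: c => [|c IH]; first by rewrite mul1n.
by rewrite mulSn; apply: per_add.
Qed.

Lemma per_sub X (x : nat -> X) P Q : Q < P -> per x P -> per x Q -> per x (P - Q).
Proof.
move=> lt [P0 [N HN]] [Q0 [M HM]]; split; first by rewrite subn_gt0.
exists (maxn N M) => k Hk.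
have h1 := HM (k + (P - Q)).
rewrite -h1; last by apply: leq_trans (leq_addr _ _); apply: leq_trans Hk; exact: leq_maxr.
rewrite -addnA subnK ?(ltnW lt) //; apply: HN; apply: leq_trans Hk; exact: leq_maxl.
Qed.

Lemma per_dvd X (x : nat -> X) c P :
  per x c -> (forall Q, per x Q -> c <= Q) -> per x P -> c %| P.
Proof.
move=> hc hmin hP.
have c0 : 0 < c by case: hc.
rewrite /dvdn; apply/eqP.
case: (posnP (P %% c)) => // r0; exfalso.
have hPc := hmin P hP.
have eP := divn_eq P c.
case: (posnP (P %/ c)) => q0.
  move: eP; rewrite q0 mul0n add0n => eP.
  have := ltn_pmod P c0; rewrite -eP ltnNge hPc //.
have hM : per x (P %/ c * c) by apply: per_mul.
have lt : P %/ c * c < P by rewrite {2}eP -{1}(addn0 (P %/ c * c)) ltn_add2l.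
have := per_sub lt hP hM.
have -> : P - P %/ c * c = P %% c by rewrite {1}eP addKn.
move=> /hmin; rewrite leqNgt ltn_pmod //.
Qed.

Lemma per_min X (x : nat -> X) P : per x P ->
  exists c, per x c /\ forall Q, per x Q -> c <= Q.
Proof.
elim: P {-2}P (leqnn P) => [|P IH] P' hle hP'.
  by case: hP'; rewrite leqn0 in hle; rewrite (eqP hle).
case: (classic (exists Q, per x Q /\ Q < P')) => [[Q [hQ lt]]|no].
  apply: (IH Q) => //; rewrite -ltnS; exact: leq_trans lt hle.
exists P'; split=> // Q hQ; rewrite leqNgt; apply/negP => lt; apply: no; by exists Q.
Qed.

Section Ducci.
Variable n : nat.
Definition U (f : {ffun 'I_n -> nat}) : {ffun 'I_n -> nat} :=
  [ffun i => f i + f (ordS i)].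
Definition red (d : nat) (f : {ffun 'I_n -> nat}) : {ffun 'I_n -> nat} :=
  [ffun i => f i %% d].
Definition seqd d f := fun k => red d (iter k U f).

Lemma UE f i : U f i = f i + f (ordS i).
Proof. by rewrite ffunE. Qed.

Lemma red_U d f : red d (U (red d f)) = red d (U f).
Proof. by apply/ffunP => i; rewrite !ffunE modnDm. Qed.

Lemma red_iter d f k : red d (iter k U (red d f)) = red d (iter k U f).
Proof.
elim: k => [|k IH] /=; first by apply/ffunP => i; rewrite !ffunE modn_mod.
by rewrite -red_U IH red_U.
Qed.

Lemma iterT m a k : is_vec m a -> iter k (@Tmap m n) a = red m (iter k U a).
Proof.
move=> va; elim: k => [|k IH] /=.
  by apply/ffunP => i; rewrite ffunE modn_small.
by rewrite IH; apply/ffunP => i; rewrite !ffunE modnDm.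
Qed.

Lemma evp_per m a P : is_vec m a -> (@is_eventual_period m n a P <-> per (seqd m a) P).
Proof.
move=> va; split => h.
  change (per (fun k => iter k (@Tmap m n) a) P) in h.
  by apply: per_ext h => k; rewrite /seqd iterT.
change (per (fun k => iter k (@Tmap m n) a) P).
by apply: per_ext h => k; rewrite /seqd iterT.
Qed.

Lemma seq_red d f P : per (seqd d (red d f)) P <-> per (seqd d f) P.
Proof.
by split; apply: per_ext => k; rewrite /seqd red_iter.
Qed.

Definition V (j : 'I_n) : {ffun 'I_n -> nat} := [ffun i => (i == j) : nat].

Lemma iter_lin f k i : iter k U f i = \sum_j f j * iter k U (V j) i.
Proof.
elim: k i => [|k IH] i /=.
  rewrite (bigD1 i) //= big1 ?addn0; first by rewrite ffunE eqxx muln1.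
  by move=> j hj; rewrite ffunE eq_sym (negbTE hj) muln0.
rewrite UE IH IH -big_split /=; apply: eq_bigr => j _; by rewrite UE mulnDr.
Qed.

Definition good d N P (f : {ffun 'I_n -> nat}) :=
  forall k, N <= k -> red d (iter (k + P) U f) = red d (iter k U f).

Lemma good_all d N P f : (forall j, good d N P (V j)) -> good d N P f.
Proof.
move=> hV k hk; apply/ffunP => i; rewrite !ffunE (iter_lin f (k+P)) (iter_lin f k).
rewrite -modn_summ -[in RHS]modn_summ; congr (_ %% _); apply: eq_bigr => j _.
have := congr1 (fun g : {ffun 'I_n -> nat} => g i) (hV j k hk); rewrite !ffunE => e.
by rewrite -modnMmr e modnMmr.
Qed.

Definition sh (f : {ffun 'I_n -> nat}) : {ffun 'I_n -> nat} := [ffun i => f (ord_pred i)].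

Lemma U_sh f : U (sh f) = sh (U f).
Proof. by apply/ffunP => i; rewrite !ffunE ordSK ord_predK. Qed.

Lemma iter_sh k f : iter k U (sh f) = sh (iter k U f).
Proof. by elim: k => //= k ->; rewrite U_sh. Qed.

Lemma red_sh d f : red d (sh f) = sh (red d f).
Proof. by apply/ffunP => i; rewrite !ffunE. Qed.

Lemma good_sh d N P f : good d N P f -> good d N P (sh f).
Proof. by move=> h k hk; rewrite !iter_sh !red_sh h. Qed.

Lemma sh_V j : sh (V j) = V (ordS j).
Proof.
apply/ffunP => i; rewrite !ffunE; congr (nat_of_bool _).
by apply/eqP/eqP => [<-|->]; rewrite ?ord_predK ?ordSK.
Qed.

Lemma V_iter (o : 'I_n) t : iter t sh (V o) = V (iter t (@ordS n) o).
Proof. by elim: t => //= t ->; rewrite sh_V. Qed.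

Lemma val_iter (o : 'I_n) t : val (iter t (@ordS n) o) = (o + t) %% n.
Proof.
elim: t => [|t IH] /=; first by rewrite addn0 modn_small.
by rewrite IH -addn1 modnDml addn1 addnS.
Qed.

Lemma goodV0 d N P (o : 'I_n) : val o = 0 -> good d N P (V o) ->
  forall f, good d N P f.
Proof.
move=> ho hg f; apply: good_all => j.
have -> : j = iter j (@ordS n) o.
  by apply: val_inj; rewrite val_iter ho add0n modn_small.
rewrite -V_iter; elim: (nat_of_ord j) => //= t IH; exact: good_sh.
Qed.

Lemma perV0 d P (o : 'I_n) : val o = 0 -> per (seqd d (V o)) P ->
  forall f, per (seqd d f) P.
Proof.
move=> ho [P0 [N hN]] f; split=> //; exists N; exact: (goodV0 ho hN).
Qed.

Lemma per_exists d f : 0 < d -> exists P, per (seqd d f) P.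
Proof.
case: d => // d _.
pose phi (g : {ffun 'I_n -> nat}) : {ffun 'I_n -> 'I_d.+1} := [ffun t => inord (g t)].
pose s (k : 'I_(#|{ffun 'I_n -> 'I_d.+1}|.+1)) := phi (seqd d.+1 f k).
have : ~~ injectiveb s.
  apply/negP => /injectiveP inj; have := leq_card _ inj; by rewrite card_ord ltnn.
have inj : forall x y, phi (seqd d.+1 f x) = phi (seqd d.+1 f y) ->
    seqd d.+1 f x = seqd d.+1 f y.
  move=> x y e; apply/ffunP => t; have := congr1 (fun F : {ffun 'I_n -> 'I_d.+1} => val (F t)) e.
  by rewrite /= !ffunE !inordK ?ltn_pmod.
have H : forall i j : nat, i < j -> seqd d.+1 f i = seqd d.+1 f j ->
    exists P, per (seqd d.+1 f) P.
  move=> i j lt e; exists (j - i); split; first by rewrite subn_gt0.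
  exists i => k hk; rewrite /seqd.
  have -> : k + (j - i) = (k - i) + j by lia.
  rewrite iterD -red_iter; rewrite /seqd in e; rewrite -e red_iter -iterD subnK //.
case/injectivePn => i [j] neq e.
have e' := inj _ _ e.
case: (ltngtP i j) => [lt|lt|eq]; first exact: H lt e'.
  exact: H lt (esym e').
by move: neq; rewrite (ord_inj eq) eqxx.
Qed.

Lemma keyB d q (o : 'I_n) : 0 < d -> Pmax d n q -> val o = 0 ->
  [/\ per (seqd d (V o)) q, (forall Q, per (seqd d (V o)) Q -> q <= Q)
   & forall f, per (seqd d f) q].
Proof.
move=> d0 [[b [vb [hbq hbmin]]] hmax] ho.
have [P0 hP0] := per_exists (V o) d0.
have [E [hE hEmin]] := per_min hP0.
have va0 : is_vec d (red d (V o)) by move=> i; rewrite ffunE ltn_pmod.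
have cl : @cycle_length d n (red d (V o)) E.
  split; first by apply/(evp_per _ va0)/seq_red.
  by move=> Q /(evp_per _ va0)/seq_red; apply: hEmin.
have Eq := hmax _ _ va0 cl.
have hbE : per (seqd d b) E := perV0 ho hE b.
have hbq' : per (seqd d b) q by apply/(evp_per _ vb).
have qE : q %| E.
  apply: per_dvd hbq' _ hbE => Q /(evp_per _ vb); exact: hbmin.
have E0 : 0 < E by case: hE.
have qE' : q = E by apply/eqP; rewrite eqn_leq Eq (dvdn_leq E0 qE).
by rewrite qE'; split => //; exact: (perV0 ho hE).
Qed.

End Ducci.

Lemma prod_dvd r (p : 'I_r -> nat) :
  (forall i j, i != j -> coprime (p i) (p j)) ->
  forall z, (forall i, p i %| z) -> \prod_(i < r) p i %| z.
Proof.
elim: r p => [|r IH] p cop z hz; first by rewrite big_ord0 dvd1n.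
rewrite big_ord_recr /= Gauss_dvd.
  apply/andP; split; last exact: hz.
  apply: IH => [i j neq|i]; last exact: hz.
  apply: cop; apply: contra neq => /eqP/(congr1 val) /= e; apply/eqP/val_inj.
  exact: e.
apply: (big_ind (fun x => coprime x (p ord_max))) => [|x y hx hy|i _].
- exact: coprime1n.
- by rewrite coprimeMl hx hy.
- apply: cop; by rewrite -(inj_eq val_inj) /= (ltn_eqF (ltn_ord i)).
Qed.

Lemma crt_mod r (p : 'I_r -> nat) x y :
  (forall i j, i != j -> coprime (p i) (p j)) ->
  (forall i, x %% p i = y %% p i) -> x %% (\prod_(i < r) p i) = y %% (\prod_(i < r) p i).
Proof.
move=> cop.
wlog le : x y / y <= x.
  move=> W h; case: (leqP y x) => [le|lt]; first exact: W.
  by symmetry; apply: W; [exact: ltnW | move=> i; symmetry].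
move=> h; apply/eqP; rewrite eqn_mod_dvd //; apply: prod_dvd => // i.
by rewrite -eqn_mod_dvd //; apply/eqP.
Qed.

Lemma crt_per n r (p : 'I_r -> nat) (f : {ffun 'I_n -> nat}) P :
  (forall i j, i != j -> coprime (p i) (p j)) -> 0 < P ->
  (forall i, per (seqd (p i) f) P) <-> per (seqd (\prod_(i < r) p i) f) P.
Proof.
move=> cop P0; split.
  move=> h.
  have [Nf hN] : exists Nf : 'I_r -> nat, forall i k, Nf i <= k ->
      seqd (p i) f (k + P) = seqd (p i) f k.
    apply: (@fin_all_exists _ (fun _ => nat)
      (fun i N => forall k, N <= k -> seqd (p i) f (k + P) = seqd (p i) f k)) => i.
    by case: (h i).
  split=> //; exists (\max_i Nf i) => k hk; apply/ffunP => t; rewrite !ffunE.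
  apply: crt_mod => // i.
  have := congr1 (fun g : {ffun 'I_n -> nat} => g t) (hN i k (leq_trans (leq_bigmax i) hk)).
  by rewrite /seqd !ffunE.
move=> [_ [N hN]] i; split=> //; exists N => k hk.
apply/ffunP => t; have := congr1 (fun g : {ffun 'I_n -> nat} => g t) (hN k hk); rewrite /seqd !ffunE => e.
have dv : p i %| \prod_(j < r) p j by rewrite (bigD1 i) //= dvdn_mulr.
by rewrite -(modn_dvdm _ dv) e modn_dvdm.
Qed.

Theorem theorem3p2 (n r : nat) (p : 'I_r -> nat) (q : 'I_r -> nat) :
  0 < n ->
  (forall i, 0 < p i) ->
  (forall i j, i != j -> coprime (p i) (p j)) ->
  (forall i, Pmax (p i) n (q i)) ->
  Pmax (\prod_(i < r) p i) n (\big[lcmn/1]_(i < r) q i).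
Proof.
move=> n0 p0 cop hq.
set m := \prod_(i < r) p i; set L := \big[lcmn/1]_(i < r) q i.
have m0 : 0 < m by apply: prodn_gt0.
pose o : 'I_n := Ordinal n0.
have KB i := keyB (p0 i) (hq i) (erefl : val o = 0).
have q0 i : 0 < q i by case: (KB i) => [[]].
have L0 : 0 < L.
  by apply: (big_ind (fun x => 0 < x)) => // x y hx hy; rewrite lcmn_gt0 hx hy.
have qL i : q i %| L by apply: (biglcmn_sup i) => //.
have perL (f : {ffun 'I_n -> nat}) i : per (seqd (p i) f) L.
  rewrite -(divnK (qL i)); apply: per_mul; last by case: (KB i) => _ _; apply.
  by rewrite divn_gt0 // dvdn_leq.
have perLm (f : {ffun 'I_n -> nat}) : per (seqd m f) L by apply/crt_per.
have va0 : is_vec m (red m (V o)) by move=> i; rewrite ffunE ltn_pmod.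
split.
  exists (red m (V o)); split => //; split.
    by apply/(evp_per _ va0)/seq_red.
  move=> Q /(evp_per _ va0)/seq_red hQ.
  have Q0 : 0 < Q by case: hQ.
  suff : L %| Q by apply: dvdn_leq.
  apply/dvdn_biglcmP => i _.
  have hQi := (proj2 (@crt_per n r p (V o) Q cop Q0) hQ) i.
  case: (KB i) => h1 h2 _; exact: per_dvd h1 h2 hQi.
move=> a Q va [hQ hmin].
apply: dvdn_leq L0 _.
apply: per_dvd (perLm a).
- by apply/(evp_per _ va).
- by move=> Q' /(evp_per _ va); apply: hmin.
Qed.
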